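(* Let $k$ be a positive integer and let $G$ be a DPG-$[k,2]$-colorable graph. Then: (1) $G$ is DP-$k$-colorable, and thus $k$-choosable. (2) $G$ is DP-vertex-$\lceil k/2\rceil$-arborable. (3) Let $d$ be an integer with $2d>k$ and $d\le k$. If $L$ is a $d$-assignment of $G$ (colors being positive integers, so that $1,2,\dots,2d-k$ are colors), then $G$ has an $L$-forested-coloring such that $C(i)$ is an independent set for each $i\in\{1,\dots,2d-k\}$.
   Context: All graphs are finite, simple, undirected. An assignment $L$ gives each vertex $v$ a set $L(v)$ of colors (positive integers); $k$-assignment means $|L(v)|=k$; $G$ is $k$-choosable if every $k$-assignment admits a proper coloring from the lists. A cover $H$ of $G$ w.r.t. $L$ has vertex set $\{(u,c):c\in L(u)\}$, each $\{u\}\times L(u)$ is a clique, for each edge $uv$ the edges between $\{u\}\times L(u)$ and $\{v\}\times L(v)$ form a matching, and there are no such edges for non-adjacent $u,v$. A representative set contains exactly one vertex of each $\{v\}\times L(v)$. DP-coloring: representative $R$ with $H[R]$ edgeless; DP-$k$-colorable: exists for every $k$-assignment and cover. DP-forested-coloring: representative $R$ with $H[R]$ a forest; DP-vertex-$k$-arborable: exists for every $k$-assignment and cover. $L$-forested-coloring: $c(v)\in L(v)$ with every color class inducing a forest; $C(i)$ is the set of vertices colored $i$. For $F=(f_1,\dots,f_s)$, $f_i:V(G)\to\mathbb{Z}_{\ge0}$, $|f(v)|=\sum_i f_i(v)$; a DP-$F$-coloring of $(G,H)$ is a representative set $R$ admitting an ordering in which each $(v,i)\in R$ has fewer than $f_i(v)$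 $H$-neighbors among earlier elements of $R$. $G$ is DPG-$[k,t]$-colorable if for every $s\ge1$, every cover $H$ w.r.t. $L(v)=\{1,\dots,s\}$ for all $v$, and every $F$ with $|f(v)|\ge k$ and $f_i(v)\le t$ for all $v,i$, $(G,H)$ has a DP-$F$-coloring. *)

(* Defs.v *)
From mathcomp Require Import all_boot.

Set Implicit Arguments.
Unset Strict Implicit.
Unset Printing Implicit Defensive.

Definition simple_graph (T : finType) (e : rel T) : Prop :=
  symmetric e /\ irreflexive e.

(* An assignment L gives each vertex a finite set of colors (positive
   integers), represented as a duplicate-free list. *)
Definition assignment (T : finType) (L : T -> seq nat) : Prop :=
  forall v, uniq (L v) /\ all (fun c => 0 < c) (L v).

Definition k_assignment (T : finType) (k : nat) (L : T -> seq nat) : Prop :=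
  assignment L /\ forall v, size (L v) = k.

(* A cover H of G w.r.t. L.  Its vertex set is {(u,c) : c in L u}; each
   {u} x L(u) is a clique (implicit).  M u c v d holds iff there is an edge
   between (u,c) and (v,d) with u <> v; these edges exist only for adjacent
   u, v, and for each edge uv they form a matching. *)
Definition cover (T : finType) (e : rel T) (L : T -> seq nat)
    (M : T -> nat -> T -> nat -> bool) : Prop :=
  [/\ forall u c v d, M u c v d -> [&& e u v, c \in L u & d \in L v],
      forall u c v d, M u c v d = M v d u c &
      forall u c v d1 d2, M u c v d1 -> M u c v d2 -> d1 = d2].

(* A representative set R of H, given as the choice function r : one
   vertex (v, r v) of each {v} x L(v). *)
Definition representative (T : finType) (L : T -> seq nat) (r : T -> nat) :=
  forall v, r v \in L v.

(* The graph H[R] on the chosen vertices, indexed by T. *)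
Definition induced_rep (T : finType) (M : T -> nat -> T -> nat -> bool)
    (r : T -> nat) : rel T :=
  fun u v => M u (r u) v (r v).

Definition forest (T : finType) (g : rel T) : Prop :=
  ~ exists s : seq T, [&& uniq s, 2 < size s & cycle g s].

Definition DP_colorable (T : finType) (e : rel T) (k : nat) : Prop :=
  forall L M, k_assignment k L -> cover e L M ->
  exists r, representative L r /\ forall u v, ~~ induced_rep M r u v.

Definition choosable (T : finType) (e : rel T) (k : nat) : Prop :=
  forall L, k_assignment k L ->
  exists c : T -> nat, (forall v, c v \in L v) /\
    forall u v, e u v -> c u != c v.

Definition DP_vertex_arborable (T : finType) (e : rel T) (k : nat) : Prop :=
  forall L M, k_assignment k L -> cover e L M ->
  exists r, representative L r /\ forest (induced_rep M r).

Definition class_graph (T : finType) (e : rel T) (c : T -> nat) (i : nat)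
  : rel T := fun x y => [&& e x y, c x == i & c y == i].

Definition L_forested_coloring (T : finType) (e : rel T) (L : T -> seq nat)
    (c : T -> nat) : Prop :=
  (forall v, c v \in L v) /\ forall i, forest (class_graph e c i).

Definition independent_class (T : finType) (e : rel T) (c : T -> nat)
    (i : nat) : Prop :=
  forall x y, c x = i -> c y = i -> ~~ e x y.

Definition full_assignment (T : finType) (s : nat) : T -> seq nat :=
  fun _ => iota 1 s.

(* DP-F-coloring of (G,H) with H a cover w.r.t. L(v) = {1..s}, where
   F = (f_1, ..., f_s) is given by f i v = f_i(v) (for 1 <= i <= s):
   a representative set R (given by r) admitting an ordering (a listing
   ord of all vertices, each exactly once) in which each (v, r v) has
   fewer than f_{r v}(v) H-neighbours among the earlier elements of R. *)
Definition DP_F_coloring (T : finType) (s : nat)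
    (M : T -> nat -> T -> nat -> bool) (f : nat -> T -> nat) : Prop :=
  exists r : T -> nat, representative (@full_assignment T s) r /\
  exists ord : seq T, perm_eq ord (enum T) /\
    forall v : T,
      count (fun u => M v (r v) u (r u)) (take (index v ord) ord)
        < f (r v) v.

Definition DPG_colorable (T : finType) (e : rel T) (k t : nat) : Prop :=
  forall (s : nat) (M : T -> nat -> T -> nat -> bool) (f : nat -> T -> nat),
    1 <= s ->
    cover e (@full_assignment T s) M ->
    (forall v, k <= \sum_(1 <= i < s.+1) f i v) ->
    (forall v i, 1 <= i <= s -> f i v <= t) ->
    DP_F_coloring s M f.

(* Main.v *)
Require Import Defs.
From mathcomp Require Import all_boot zify.
Set Implicit Arguments.
Unset Strict Implicit.

Definition lab (T : finType) (L : T -> seq nat) v j := nth 0 (L v) j.-1.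
Definition relab (T : finType) (L : T -> seq nat) (M : T -> nat -> T -> nat -> bool) n
  u j v j' := [&& M u (lab L u j) v (lab L v j'), 0 < j <= n & 0 < j' <= n].

Lemma relab_cover (T : finType) e (L : T -> seq nat) M n :
  k_assignment n L -> Defs.cover e L M -> Defs.cover e (@full_assignment T n) (relab L M n).
Proof.
move=> [hA hS] [h1 h2 h3]; split.
- move=> u c v d /and3P [hm hc hd]; case/and3P: (h1 _ _ _ _ hm) => -> _ _ /=.
  by rewrite /full_assignment !mem_iota; apply/andP; split; lia.
- by move=> u c v d; rewrite /relab h2; congr (_ && _); exact: andbC.
- move=> u c v d1 d2 /and3P [m1 _ b1] /and3P [m2 _ b2].
  have hu : uniq (L v) by case: (hA v).
  have := h3 _ _ _ _ _ m1 m2; move/eqP; rewrite /lab nth_uniq ?hS //; [move/eqP; lia | lia | lia].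
Qed.

Lemma lab_mem (T : finType) (L : T -> seq nat) n r v :
  k_assignment n L -> representative (@full_assignment T n) r -> lab L v (r v) \in L v.
Proof.
move=> [hA hS] hr; rewrite /lab mem_nth // hS.
by have := hr v; rewrite /full_assignment mem_iota; lia.
Qed.

Lemma relab_rep (T : finType) (L : T -> seq nat) (M : T -> nat -> T -> nat -> bool) n r u v :
  representative (@full_assignment T n) r ->
  M u (lab L u (r u)) v (lab L v (r v)) -> relab L M n u (r u) v (r v).
Proof.
move=> hr hm; rewrite /relab hm /=.
by have := hr u; have := hr v; rewrite /full_assignment !mem_iota => ? ?; apply/andP; split; lia.
Qed.

Definition eqM (T : finType) (e : rel T) (L : T -> seq nat) u c v d :=
  [&& e u v, c == d, c \in L u & d \in L v].

Lemma eqM_cover (T : finType) (e : rel T) L : symmetric e -> Defs.cover e L (eqM e L).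
Proof.
move=> hs; split.
- by move=> u c v d /and4P [-> _ -> ->].
- by move=> u c v d; rewrite /eqM hs eq_sym; case: (c == d) (d \in L v) (c \in L u) => [] [] [] //=;
     case/boolP: (d == c) => // /eqP ->.
- by move=> u c v d1 d2 /and4P [_ /eqP <- _ _] /and4P [_ /eqP <- _ _].
Qed.

Lemma sum_aux p (s : seq nat) :
  \sum_(x <- s) (if x <= p then 1 else 2) + count (fun x => x <= p) s = (size s).*2.
Proof.
elim: s => [|x s IH]; first by rewrite big_nil.
rewrite big_cons /=; case: (x <= p) IH => /=; lia.
Qed.

Lemma count_small p (s : seq nat) : uniq s -> all (fun c => 0 < c) s ->
  count (fun x => x <= p) s <= p.
Proof.
move=> us ps; rewrite -size_filter -{2}(size_iota 1 p).
apply: uniq_leq_size; first exact: filter_uniq.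
move=> x; rewrite mem_filter mem_iota => /andP [xp xs].
by have := allP ps x xs; lia.
Qed.

Lemma ord_mem (T : finType) (ord : seq T) x : perm_eq ord (enum T) -> x \in ord.
Proof. by move=> hp; rewrite (perm_mem hp) mem_enum. Qed.
Arguments ord_mem {T ord} x _.

Lemma ord_tot (T : finType) (ord : seq T) x y : perm_eq ord (enum T) -> x != y ->
  x \in take (index y ord) ord \/ y \in take (index x ord) ord.
Proof.
move=> hp nxy; rewrite !in_take ?ord_mem //.
case: (ltngtP (index x ord) (index y ord)) => h; [by left|by right|].
by move/(index_inj x (ord_mem x hp) (ord_mem y hp)): h => h; rewrite h eqxx in nxy.
Qed.

Lemma pair_of_order (T : finType) (P : T -> T -> bool) ord (b : T -> nat) x y :
  perm_eq ord (enum T) -> (forall v, count (P v) (take (index v ord) ord) < b v) ->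
  x != y -> P x y -> P y x -> b x <= 1 -> b y <= 1 -> False.
Proof.
move=> hp hc nxy pxy pyx bx by_.
have cnt : forall u w, P u w -> w \in take (index u ord) ord -> b u <= 1 -> False.
  move=> u w puw win bu.
  have : has (P u) (take (index u ord) ord) by apply/hasP; exists w.
  rewrite has_count => h; move: (hc u); lia.
case: (ord_tot hp nxy) => h; [exact: (cnt y x)| exact: (cnt x y)].
Qed.

Lemma forest_of_order (T : finType) (g : rel T) (P : T -> T -> bool) ord (b : T -> nat) :
  perm_eq ord (enum T) -> (forall v, count (P v) (take (index v ord) ord) < b v) ->
  (forall v, b v <= 2) -> (forall x y, g x y -> P x y && P y x) -> forest g.
Proof.
move=> hp hc hb hg [s /and3P [us ss cs]].
case: s us ss cs => [//|x0 s'] us ss cs.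
set s := x0 :: s' in us ss cs.
have x0s : x0 \in s by rewrite inE eqxx.
case: (@arg_maxnP T x0 (fun x => x \in s) (fun x => index x ord) x0s) => w ws wmax.
have lt_w : forall x, x \in s -> x != w -> x \in take (index w ord) ord.
  move=> x xs nxw; rewrite in_take ?ord_mem //; have := wmax x xs.
  rewrite /geq /= leq_eqVlt => /orP [/eqP e|//].
  by move: nxw; rewrite (index_inj x (ord_mem x hp) (ord_mem w hp) e) eqxx.
have := rot_index ws; set t := _ ++ _ => hr.
have ur : uniq (w :: t) by rewrite -hr rot_uniq.
have cr : cycle g (w :: t) by rewrite -hr rot_cycle.
have sr : size (w :: t) = size s by rewrite -hr size_rot.
have mr : forall z, z \in w :: t -> z \in s by move=> z; rewrite -hr mem_rot.
case: t ur cr sr mr {hr} => [|a t] ur cr sr mr; first by move: ss; rewrite -sr.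
case/lastP: t ur cr sr mr => [|t bb] ur cr sr mr; first by move: ss; rewrite -sr.
move: cr; rewrite /= rcons_path last_rcons => /and3P [gwa _ gbw].
move: ur; rewrite /= !inE !mem_rcons !inE !negb_or => /andP [/and3P [nwa nwb _] /andP [/andP [nab _] _]].
have ain : a \in s by apply: mr; rewrite !inE eqxx orbT.
have bin : bb \in s by apply: mr; rewrite !inE mem_rcons !inE eqxx !orbT.
have ta : a \in take (index w ord) ord by apply: lt_w => //; rewrite eq_sym.
have tb : bb \in take (index w ord) ord by apply: lt_w => //; rewrite eq_sym.
have pa : P w a by case/andP: (hg _ _ gwa).
have pb : P w bb by case/andP: (hg _ _ gbw).
have : size [:: a; bb] <= size (filter (P w) (take (index w ord) ord)).
  apply: uniq_leq_size; first by rewrite /= inE nab.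
  by move=> z; rewrite !inE mem_filter => /orP [] /eqP ->; rewrite ?pa ?pb ?ta ?tb.
rewrite size_filter /= => h2; have h3 := hc w; have h4 := hb w.
by move: (leq_ltn_trans h2 h3); rewrite ltnNge h4.
Qed.

Unset Implicit Arguments.
Set Strict Implicit.

Theorem lemma1 (T : finType) (e : rel T) (k : nat) :
  simple_graph e -> 0 < k -> DPG_colorable e k 2 ->
  [/\ DP_colorable e k /\ choosable e k,
      DP_vertex_arborable e (uphalf k) &
      forall d : nat, k < d.*2 -> d <= k ->
      forall L : T -> seq nat, k_assignment d L ->
      exists c : T -> nat, L_forested_coloring e L c /\
        forall i, 1 <= i <= d.*2 - k -> independent_class e c i].
Proof.
move=> [hsym hirr] k0 hD.
have irrM : forall L M u c d, Defs.cover e L M -> ~~ M u c u d.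
  by move=> L M u c d [h1 _ _]; apply/negP => /h1; rewrite hirr.
have DP : DP_colorable e k.
  move=> L M hL hM; have hc := relab_cover hL hM.
  have [||r' [hr [ord [hp hcnt]]]] := hD k (relab L M k) (fun _ _ => 1) k0 hc.
  - by move=> v; rewrite sum_nat_const_nat; lia.
  - by [].
  exists (fun v => lab L v (r' v)); split; first by move=> v; exact: lab_mem hL hr.
  move=> u v; apply/negP => h; rewrite /induced_rep in h.
  case: (eqVneq u v) => [euv|nuv]; first by subst v; move: h; apply/negP; apply: irrM hM.
  apply: (@pair_of_order T (fun x y => relab L M k x (r' x) y (r' y)) ord (fun _ => 1) u v hp hcnt nuv) => //.
  - exact: relab_rep.
  - by apply: relab_rep => //; case: hM => _ -> _.
split.
- split => //.
  move=> L hL; have [r [hr hno]] := DP L (eqM e L) hL (eqM_cover L hsym).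
  exists r; split => // u v euv; apply/negP => /eqP ruv.
  by move: (hno u v); rewrite /induced_rep /eqM euv ruv eqxx hr -ruv hr.
- move=> L M hL hM; have hc := relab_cover hL hM.
  have [|||r' [hr [ord [hp hcnt]]]] := hD (uphalf k) (relab L M (uphalf k)) (fun _ _ => 2) _ hc.
  + by rewrite uphalf_gt0.
  + by move=> v; rewrite sum_nat_const_nat; lia.
  + by [].
  exists (fun v => lab L v (r' v)); split; first by move=> v; exact: lab_mem hL hr.
  apply: (@forest_of_order T _ (fun x y => relab L M (uphalf k) x (r' x) y (r' y)) ord (fun _ => 2) hp hcnt) => //.
  move=> x y h; rewrite /induced_rep in h; apply/andP; split; apply: relab_rep => //.
  by case: hM => _ <- _.
- move=> d kd dk L hL.
  set p := d.*2 - k.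
  have hc := relab_cover hL (eqM_cover L hsym).
  set f := fun j v => if lab L v j <= p then 1 else 2.
  have [|||r' [hr [ord [hp hcnt]]]] := hD d (relab L (eqM e L) d) f _ hc.
  + lia.
  + move=> v; rewrite big_add1 /= /f /lab.
    case: hL => hA hS; case: (hA v) => hu hpos.
    have h1 := count_small p hu hpos.
    have h2 := sum_aux p (L v); rewrite (big_nth 0) hS in h2.
    rewrite (eq_bigr (fun i => if nth 0 (L v) i <= p then 1 else 2)) //.
    move: h1 h2; rewrite /p; lia.
  + by move=> v i _; rewrite /f; case: ifP.
  set c := fun v => lab L v (r' v).
  have cm : forall v, c v \in L v by move=> v; exact: lab_mem hL hr.
  have hE : forall x y, e x y -> c x = c y -> eqM e L x (c x) y (c y).
    by move=> x y exy cxy; rewrite /eqM exy !cm cxy eqxx.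
  exists c; split; first split => //.
  + move=> i.
    apply: (@forest_of_order T _ (fun x y => relab L (eqM e L) d x (r' x) y (r' y)) ord (fun v => f (r' v) v) hp hcnt).
    * by move=> v; rewrite /f; case: ifP.
    * move=> x y /and3P [exy /eqP cx /eqP cy]; apply/andP; split; apply: relab_rep => //;
        (apply: hE; [by rewrite // hsym | by rewrite cx cy]).
  + move=> i /andP [i1 ip] x y cx cy; apply/negP => exy.
    have nxy : x != y by apply/eqP => h; subst y; move: exy; rewrite hirr.
    have fx : forall z, c z = i -> f (r' z) z <= 1 by move=> z cz; rewrite /f -/(c z) cz ip.
    apply: (@pair_of_order T (fun x y => relab L (eqM e L) d x (r' x) y (r' y)) ord (fun v => f (r' v) v) x y hp hcnt nxy _ _ (fx x cx) (fx y cy)).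
    * by apply: relab_rep => //; apply: hE; rewrite ?cx ?cy.
    * by apply: relab_rep => //; apply: hE; [rewrite hsym | rewrite cx cy].
Qed.
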